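(* As $n\to\infty$, $$(1+o(1))\frac{n}{2}\le g_{\mathrm{ECB}}(n,K_3)\le (1+o(1))\frac{2n}{3}.$$
   Context: Embedded Constructor-Blocker game: the vertices of $K_n$ are placed at the $n$-th roots of unity in the complex plane, and each edge is drawn as the straight chord inside the unit disk between its endpoints. Constructor and Blocker alternately claim previously unclaimed edges, Constructor moving first. Constructor may only claim an edge whose chord does not cross (in an interior point) any chord she has already claimed; Blocker may claim any unclaimed edge. The game ends when Constructor cannot claim any more edges or all edges are claimed. The score is the number of triangles in Constructor's graph at the end; Constructor maximizes it, Blocker minimizes it. $g_{\mathrm{ECB}}(n,K_3)$ denotes the score under optimal play. *)

(* Defs.v *)
From mathcomp Require Import all_boot all_order all_algebra.
Set Implicit Arguments. Unset Strict Implicit. Unset Printing Implicit Defensive.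

(* Vertices of K_n: 'I_n, vertex k placed at exp(2 pi i k / n).
   An edge {i,j} is represented by the ordered pair (i,j) with i < j. *)
Definition edges (n : nat) : {set 'I_n * 'I_n} := [set e : 'I_n * 'I_n | (e.1 < e.2)%N].

(* Two chords between points in convex position (the n-th roots of unity, in
   cyclic order 0,1,...,n-1) cross in an interior point iff their four
   endpoints are distinct and interleave in the cyclic order. *)
Definition cross (n : nat) (e f : 'I_n * 'I_n) : bool :=
  ((e.1 < f.1)%N && (f.1 < e.2)%N && (e.2 < f.2)%N) ||
  ((f.1 < e.1)%N && (e.1 < f.2)%N && (f.2 < e.2)%N).

Definition triangles (n : nat) (C : {set 'I_n * 'I_n}) : nat :=
  #|[set t : 'I_n * 'I_n * 'I_n |
      [&& (t.1.1, t.1.2) \in C, (t.1.2, t.2) \in C & (t.1.1, t.2) \in C]]|.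

(* Optimal-play value of the game from position (C, B) (Constructor's and
   Blocker's claimed edges), with [cturn] true iff Constructor is to move,
   [fuel] bounding the number of remaining moves. *)
Fixpoint ecb_value (n : nat) (fuel : nat) (cturn : bool)
    (C B : {set 'I_n * 'I_n}) : nat :=
  match fuel with
  | 0 => triangles C
  | k.+1 =>
    let avail := [set e in edges n | (e \notin C) && (e \notin B)] in
    let cmoves := [set e in avail | [forall f in C, ~~ cross e f]] in
    if cmoves == set0 then triangles C
    else if cturn then
      \max_(e in cmoves) ecb_value k false (e |: C) B
    else
      (* avail is nonempty here, so the initial value n^3 is never used *)
      \big[minn/n ^ 3]_(e in avail) ecb_value k true C (e |: B)
  end.

Definition g_ECB_K3 (n : nat) : nat :=
  @ecb_value n #|edges n| true set0 set0.

(* Main.v *)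
Require Import Defs.
From mathcomp Require Import all_boot all_order all_algebra.
From mathcomp Require Import zify ring lra.
Set Implicit Arguments. Unset Strict Implicit. Unset Printing Implicit Defensive.

(* Proof strategy:
   - upper bound: Blocker claims boundary edges (i,i+1) that are not adjacent to
     his previous ones; every such edge forbids one "middle vertex" of a triangle.
   - lower bound: Constructor answers every Blocker boundary edge with a boundary
     edge and every non-crossed Blocker chord with a chord crossing it; at the end
     Constructor's graph plus the boundary is a maximal outerplanar graph. *)

Section Common.
Variable n : nat.
Notation V := 'I_n.
Notation E := (V * V)%type.

Lemma crossC (e f : E) : cross e f = cross f e.
Proof. rewrite /cross; lia. Qed.

Lemma cross_irr (e : E) : cross e e = false.
Proof. rewrite /cross; lia. Qed.

Definition ncr (C : {set E}) (e : E) := [forall f in C, ~~ cross e f].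
Definition good (C B : {set E}) := [&& C \subset edges n, B \subset edges n,
  [forall e in C, e \notin B] & [forall e in C, ncr C e]].

Lemma goodP C B : good C B ->
  [/\ forall e, e \in C -> e.1 < e.2, forall e, e \in B -> e.1 < e.2,
      forall e, e \in C -> e \in B -> False &
      forall e f, e \in C -> f \in C -> cross e f = false].
Proof.
case/and4P=> /subsetP sC /subsetP sB dCB /forallP nc; split.
- by move=> e /sC; rewrite inE.
- by move=> e /sB; rewrite inE.
- by move=> e eC eB; move: dCB => /forallP/(_ e); rewrite eC eB.
- by move=> e f eC fC; move: (nc e); rewrite eC /= => /forallP/(_ f); rewrite fC /= => /negbTE.
Qed.

Definition mid (C : {set E}) (y : V) :=
  [exists x, exists z, [&& (x,y) \in C, (y,z) \in C & (x,z) \in C]].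

Definition Tset (C : {set E}) := [set t : V * V * V |
      [&& (t.1.1, t.1.2) \in C, (t.1.2, t.2) \in C & (t.1.1, t.2) \in C]].

Lemma trianglesE C : triangles C = #|Tset C|. Proof. by []. Qed.

Lemma tri_le_mid C B : good C B -> triangles C <= #|[set y | mid C y]|.
Proof.
case/goodP=> lt _ _ nc; rewrite trianglesE.
have inj : {in Tset C &, injective (fun t : V * V * V => t.1.2)}.
  move=> [[x y] z] [[x' y'] z']; rewrite !inE /= => /and3P[h1 h2 h3] /and3P[h1' h2' h3'] eyy.
  subst y'.
  have := lt _ h1; have := lt _ h2; have := lt _ h3; have := lt _ h1'; have := lt _ h2'; have := lt _ h3'.
  have := nc _ _ h3 h1'; have := nc _ _ h3' h1; have := nc _ _ h3 h2'; have := nc _ _ h3' h2.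
  rewrite /cross /= => c1 c2 c3 c4 l1 l2 l3 l4 l5 l6.
  have ex : x = x' by apply/val_inj => /=; lia.
  have ez : z = z' by apply/val_inj => /=; lia.
  by rewrite ex ez.
rewrite -(card_in_imset inj); apply: subset_leq_card; apply/subsetP => y /imsetP[t].
rewrite !inE => /and3P[h1 h2 h3] ->; apply/existsP; exists t.1.1; apply/existsP; exists t.2.
by rewrite h1 h2 h3.
Qed.


Definition pathe (e : E) := e.2 == e.1.+1 :> nat.
Definition vdisj (f g : E) := [&& f.1 != g.1, f.1 != g.2, f.2 != g.1 & f.2 != g.2].
Definition okS (B S : {set E}) := (S \subset [set e in B | pathe e]) &&
  [forall f in S, forall g in S, (f != g) ==> vdisj f g].
Definition Q (B : {set E}) := \max_(S | okS B S) #|S|.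

Lemma pe_notmid C B e : good C B -> e \in B -> pathe e -> ~~ (mid C e.1 && mid C e.2).
Proof.
case: e => a b; rewrite /pathe /=.
case/goodP=> lt _ dj nc eB /eqP pe; apply/negP => /andP[/existsP[x /existsP[z /and3P[h1 h2 h3]]]].
move=> /existsP[x' /existsP[z' /and3P[h1' h2' h3']]].
have zn : (z : nat) != b.
  apply/negP => /eqP ez; have E1 : z = b by apply: val_inj.
  by rewrite E1 in h2; apply: (dj _ h2 eB).
have xn : (x' : nat) != a.
  apply/negP => /eqP ex; have E1 : x' = a by apply: val_inj.
  by rewrite E1 in h1'; apply: (dj _ h1' eB).
have := lt _ h1; have := lt _ h2; have := lt _ h1'; have := lt _ h2'.
have := nc _ _ h1' h2; rewrite /cross /= => c1 l1 l2 l3 l4.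
move: zn xn; lia.
Qed.

Lemma tri_Q C B : good C B -> triangles C + Q B <= n.
Proof.
move=> g; apply: leq_trans (leq_add (tri_le_mid g) (leqnn _)) _.
have [S okSS ->] : {S | okS B S & Q B = #|S|}.
  have [|S0 S0in S0e] := @eq_bigmax_cond _ (fun S => okS B S) (fun S => #|S|).
    apply/card_gt0P; exists set0; rewrite unfold_in /= /okS sub0set /=.
    by apply/forall_inP => f; rewrite inE.
  by exists S0.
case/andP: okSS => /subsetP sS /forall_inP dS.
pose h (e : E) := if mid C e.1 then e.2 else e.1.
have hinj : {in S &, injective h}.
  move=> e f eS fS he; apply/eqP; apply/negPn/negP => nef.
  move: (dS e eS) => /forall_inP/(_ f fS); rewrite nef /= /vdisj => /and4P[a b c d].
  by move: he; rewrite /h; case: ifP; case: ifP => _ _ hh; move: a b c d; rewrite hh ?eqxx.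
have hnm : forall e, e \in S -> ~~ mid C (h e).
  move=> e /sS; rewrite inE => /andP[eB pe]; have := pe_notmid g eB pe.
  by rewrite /h; case: ifP => //= ->.
have sub : [set y | mid C y] \subset ~: (h @: S).
  apply/subsetP => y; rewrite !inE => my; apply/imsetP => -[e eS ye].
  by move: (hnm e eS); rewrite -ye my.
rewrite -(card_in_imset hinj); apply: leq_trans (leq_add (subset_leq_card sub) (leqnn _)) _.
by rewrite addnC cardsC card_ord.
Qed.


Definition avail (C B : {set E}) := [set e in edges n | (e \notin C) && (e \notin B)].
Definition cmoves (C B : {set E}) := [set e in avail C B | ncr C e].

Lemma ecbE k c (C B : {set E}) : ecb_value k.+1 c C B =
  if cmoves C B == set0 then triangles C
  else if c then \max_(e in cmoves C B) ecb_value k false (e |: C) B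
  else \big[minn/n ^ 3]_(e in avail C B) ecb_value k true C (e |: B).
Proof. by []. Qed.

Lemma ecb0 c (C B : {set E}) : ecb_value 0 c C B = triangles C.
Proof. by []. Qed.

Lemma bigmin_le_seq (r : seq E) (P : pred E) (F : E -> nat) x e0 : e0 \in r -> P e0 ->
  \big[minn/x]_(e <- r | P e) F e <= F e0.
Proof.
elim: r => //= a r IH; rewrite inE big_cons; case/orP => [/eqP -> | er] Pe.
  by rewrite Pe geq_minl.
by case: (P a); [apply: leq_trans (geq_minr _ _) (IH er Pe) | exact: IH].
Qed.

Lemma bigmin_le (A : {set E}) (F : E -> nat) x e0 : e0 \in A ->
  \big[minn/x]_(e in A) F e <= F e0.
Proof. by move=> eA; apply: bigmin_le_seq => //; apply: mem_index_enum. Qed.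

Lemma avail0 (C B : {set E}) : avail C B == set0 -> cmoves C B == set0.
Proof. by move/eqP=> a0; apply/eqP/setP => e; rewrite /cmoves a0 !inE. Qed.

Lemma cmoves_avail C B : cmoves C B \subset avail C B.
Proof. by apply/subsetP => e; rewrite inE => /andP[]. Qed.

Lemma availC C B e : e \in avail C B -> avail (e |: C) B = avail C B :\ e.
Proof. by move=> eA; apply/setP => f; rewrite !inE; case: (f =P e) => //= ->; rewrite andbF. Qed.

Lemma availB C B e : e \in avail C B -> avail C (e |: B) = avail C B :\ e.
Proof. by move=> eA; apply/setP => f; rewrite !inE; case: (f =P e) => /= [->|_]; rewrite ?andbF // !andbT. Qed.

Lemma card_avail_step (A : {set E}) e k : e \in A -> #|A| <= k.+1 -> #|A :\ e| <= k.
Proof. by move=> eA; rewrite (cardsD1 e A) eA. Qed.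

Lemma availP C B e : e \in avail C B = [&& e \in edges n, e \notin C & e \notin B].
Proof. by rewrite /avail in_set. Qed.

Lemma cmovesP C B e : e \in cmoves C B = [&& e \in edges n, e \notin C, e \notin B & ncr C e].
Proof. by rewrite /cmoves in_set availP -!andbA. Qed.

Lemma good_C C B e : good C B -> e \in cmoves C B -> good (e |: C) B.
Proof.
case/and4P=> sC sB dj nc; rewrite cmovesP => /and4P[eE eC eB /forall_inP ne].
apply/and4P; split => //.
- by apply/subsetP => f; rewrite in_setU1 => /orP[/eqP ->//|/(subsetP sC)].
- by apply/forall_inP => f; rewrite in_setU1 => /orP[/eqP ->//|/(forall_inP dj)].
apply/forall_inP => f; rewrite in_setU1 => /orP[/eqP ->|fC]; apply/forall_inP => g; rewrite in_setU1.
  by case/orP=> [/eqP ->|/ne//]; rewrite cross_irr.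
case/orP=> [/eqP ->|gC]; last by move: (forall_inP nc f fC) => /forall_inP/(_ g gC).
by rewrite crossC; apply: ne.
Qed.

Lemma good_B C B e : good C B -> e \in avail C B -> good C (e |: B).
Proof.
case/and4P=> sC sB dj nc; rewrite availP => /and3P[eE eC eB].
apply/and4P; split => //.
- by apply/subsetP => f; rewrite in_setU1 => /orP[/eqP ->//|/(subsetP sB)].
by apply/forall_inP => f fC; rewrite in_setU1 negb_or (forall_inP dj f fC) andbT; apply/eqP => fe; move: eC; rewrite -fe fC.
Qed.

Lemma path_ncr C e : pathe e -> ncr C e.
Proof. case: e => a b; rewrite /pathe /= => /eqP pe; apply/forall_inP => -[p q] _; rewrite /cross /=; lia. Qed.

Definition Fset (C B : {set E}) := [set e in edges n | [&& pathe e, e \notin C, e \notin B &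
   [forall f in B, pathe f ==> (f.2 != e.1) && (f.1 != e.2)]]].

Lemma FsetP C B e : e \in Fset C B = [&& e \in edges n, pathe e, e \notin C, e \notin B &
   [forall f in B, pathe f ==> (f.2 != e.1) && (f.1 != e.2)]].
Proof. by rewrite /Fset in_set. Qed.

Lemma F_cmoves C B : Fset C B \subset cmoves C B.
Proof.
apply/subsetP => e; rewrite FsetP cmovesP => /and5P[eE pe eC eB _].
by rewrite eE eC eB path_ncr.
Qed.

Lemma F_C C B e : Fset C B :\ e \subset Fset (e |: C) B.
Proof.
apply/subsetP => f; rewrite in_setD1 !FsetP => /andP[fe /and5P[fE pf fC fB fa]].
by rewrite fE pf in_setU1 negb_or fe fC fB fa.
Qed.

Lemma F_B C B e : Fset C (e |: B) \subset Fset C B.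
Proof.
apply/subsetP => f; rewrite !FsetP => /and5P[fE pf fC fB /forall_inP fa].
move: fB; rewrite in_setU1 negb_or => /andP[_ fB].
by rewrite fE pf fC fB /=; apply/forall_inP => g gB; apply: fa; rewrite in_setU1 gB orbT.
Qed.

Lemma okS0 B : okS B set0.
Proof. by rewrite /okS sub0set; apply/forall_inP => f; rewrite inE. Qed.

Lemma Q_attain B : {S | okS B S & Q B = #|S|}.
Proof.
have [|S0 S0in S0e] := @eq_bigmax_cond _ (fun S => okS B S) (fun S => #|S|).
  by apply/card_gt0P; exists set0; rewrite unfold_in /= okS0.
by exists S0.
Qed.

Lemma Q_mono B e : Q B <= Q (e |: B).
Proof.
have [S oS ->] := Q_attain B; apply: leq_bigmax_cond.
case/andP: oS => sS dS; rewrite /okS dS andbT; apply: subset_trans sS _.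
by apply/subsetP => f; rewrite !inE => /andP[-> ->]; rewrite orbT.
Qed.

Lemma Q_step C B e : good C B -> e \in Fset C B -> (Q B).+1 <= Q (e |: B).
Proof.
move=> g; rewrite FsetP => /and5P[eE pe eC eB /forall_inP fa].
have [S /andP[/subsetP sS /forall_inP dS] ->] := Q_attain B.
have eS : e \notin S by apply: contra eB => /sS; rewrite inE => /andP[].
have -> : #|S|.+1 = #|e |: S| by rewrite cardsU1 eS.
apply: leq_bigmax_cond; apply/andP; split.
  apply/subsetP => f; rewrite !inE => /orP[/eqP ->|/sS]; first by rewrite eqxx pe.
  by rewrite inE => /andP[-> ->]; rewrite orbT.
have key : forall f, f \in S -> vdisj e f && vdisj f e.
  move=> f fS; move: (sS f fS); rewrite inE => /andP[fB pf].
  have ne : f != e by apply: contraNneq eS => <-.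
  move: (fa f fB); rewrite pf /= => /andP[h1 h2].
  move: ne h1 h2 pe pf; rewrite /vdisj /pathe.
  case: e {eE eC eB fa eS} => a b; case: f {fS fB} => c d /= ne h1 h2 pe pf.
  have ne' : (c != a :> nat) || (d != b :> nat).
    apply: contraNT ne; rewrite negb_or !negbK => /andP[/eqP h3 /eqP h4].
    by apply/eqP; congr pair; apply: val_inj.
  move: h1 h2 ne'; rewrite -!(inj_eq val_inj) /=; lia.
apply/forall_inP => f; rewrite in_setU1 => /orP[/eqP ->|fS]; apply/forall_inP => h; rewrite in_setU1.
  case/orP=> [/eqP ->|hS]; first by rewrite eqxx.
  by case/andP: (key h hS) => -> _; rewrite implybT.
case/orP=> [/eqP ->|hS]; first by case/andP: (key f fS) => _ ->; rewrite implybT.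
exact: (forall_inP (dS f fS) h hS).
Qed.


Lemma F_step C B e : e \in Fset C B -> (forall g, g \in Fset C B -> g.1 <= e.1) ->
  #|Fset C B| <= #|Fset C (e |: B)| + 2.
Proof.
move=> eF emax.
pose X := [set g in Fset C B | g.2 == e.1 :> nat].
have sub : Fset C B \subset (e |: X) :|: Fset C (e |: B).
  apply/subsetP => g gF; rewrite in_setU in_setU1 inE gF /=.
  case: (g =P e) => //= /eqP ge; case: (g.2 =P e.1 :> nat) => //= /eqP g2.
  have gl := emax g gF; move: gF eF; rewrite !FsetP => /and5P[gE pg gC gB /forall_inP ga] /and5P[_ pe _ _ _].
  rewrite gE pg gC in_setU1 negb_or ge gB /=; apply/forall_inP => f; rewrite in_setU1.
  case/orP=> [/eqP -> |fB]; last exact: ga.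
  rewrite pe /=; move/eqP: pe => pe; move: g2 gl; rewrite -!(inj_eq val_inj) /=; lia.
have cX : #|X| <= 1.
  apply/card_le1P => x xX y; apply/idP/idP => [yX|/eqP -> //].
  have XP : forall g, g \in X = (g \in Fset C B) && (g.2 == e.1 :> nat) by move=> g; rewrite /X in_set.
  move: xX yX; rewrite !XP !FsetP => /andP[/and5P[_ px _ _ _] /eqP x2] /andP[/and5P[_ py _ _ _] /eqP y2].
  move: px py; rewrite /pathe => /eqP px /eqP py.
  have e2 : y.2 = x.2 by apply: val_inj; rewrite /= x2 y2.
  have e1 : y.1 = x.1 by apply: val_inj; apply/eqP; rewrite -eqSS -py -px e2.
  by apply/eqP; rewrite [y]surjective_pairing [x]surjective_pairing e1 e2.
apply: leq_trans (subset_leq_card sub) _; rewrite cardsU.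
apply: leq_trans (leq_subr _ _) _; rewrite cardsU1 addnC leq_add2l.
by apply: leq_trans (leq_add (leq_b1 _) cX) _.
Qed.


Definition Pot C B := 3 * Q B + #|Fset C B|.

Lemma terminal_up C B : good C B -> cmoves C B == set0 ->
  3 * triangles C + Pot C B <= 3 * n /\ Fset C B = set0.
Proof.
move=> g /eqP c0.
have F0 : Fset C B = set0 by apply/eqP; rewrite -subset0 -c0 F_cmoves.
split => //; rewrite /Pot F0 cards0 addn0 -mulnDr leq_mul2l; exact: tri_Q g.
Qed.

Lemma card_rm1 (A : {set E}) e : #|A| <= #|A :\ e| + (A != set0).
Proof.
rewrite (cardsD1 e A); case: (boolP (e \in A)) => eA /=; last by rewrite add0n leq_addr.
have -> : A != set0 by apply/set0Pn; exists e.
by rewrite addnC.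
Qed.

Lemma upper k : forall C B, good C B -> #|avail C B| <= k ->
  3 * ecb_value k true C B + Pot C B <= 3 * n + (Fset C B != set0) /\
  3 * ecb_value k false C B + Pot C B <= 3 * n.
Proof.
elim: k => [|k IH] C B g ha.
  have a0 : avail C B == set0 by rewrite -cards_eq0 -leqn0.
  have [h1 h2] := terminal_up g (avail0 a0).
  by rewrite !ecb0; split => //; apply: leq_trans h1 (leq_addr _ _).
rewrite !ecbE; case: ifP => c0.
  have [h1 h2] := terminal_up g c0.
  by split => //; apply: leq_trans h1 (leq_addr _ _).
have cgt : 0 < #|cmoves C B| by rewrite card_gt0 c0.
split.
  have [e eC ->] := eq_bigmax_cond (fun e => ecb_value k false (e |: C) B) cgt.
  have eA : e \in avail C B by apply: (subsetP (cmoves_avail C B)).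
  have ha' : #|avail (e |: C) B| <= k by rewrite availC //; apply: card_avail_step.
  have [_ h] := IH (e |: C) B (good_C g eC) ha'.
  move: h; rewrite /Pot => h.
  have h2 := card_rm1 (Fset C B) e.
  have h3 := subset_leq_card (F_C C B e).
  set b := nat_of_bool _ in h2 *; lia.
case: (Fset C B =P set0) => [F0|/eqP /set0Pn [e0 e0F]].
  have [e eC] : exists e, e \in cmoves C B by apply/set0Pn; rewrite c0.
  have eA : e \in avail C B by apply: (subsetP (cmoves_avail C B)).
  have ha' : #|avail C (e |: B)| <= k by rewrite availB //; apply: card_avail_step.
  have [h _] := IH C (e |: B) (good_B g eA) ha'.
  have F0' : Fset C (e |: B) = set0 by apply/eqP; rewrite -subset0 -F0 F_B.
  move: h; rewrite /Pot F0 F0' eqxx cards0 /= => h.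
  have hm := Q_mono B e.
  have hb := bigmin_le (fun e => ecb_value k true C (e |: B)) (n ^ 3) eA.
  rewrite /= in hb; move: hb; set m := \big[minn/_]_(_ in _) _ => hb; set v := ecb_value k true C (e |: B) in h hb; lia.
case: (@arg_maxnP _ e0 (fun g => g \in Fset C B) (fun g : E => val g.1) e0F) => e eF emax.
have eA : e \in avail C B by apply: (subsetP (cmoves_avail C B)); apply: (subsetP (F_cmoves C B)).
have ha' : #|avail C (e |: B)| <= k by rewrite availB //; apply: card_avail_step.
have [h _] := IH C (e |: B) (good_B g eA) ha'.
move: h; rewrite /Pot => h.
have hq := Q_step g eF.
have hf := F_step eF emax.
have hb := bigmin_le (fun e => ecb_value k true C (e |: B)) (n ^ 3) eA.
rewrite /= in hb; move: hb; set m := \big[minn/_]_(_ in _) _ => hb.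
set v := ecb_value k true C (e |: B) in h hb.
have : (Fset C (e |: B) != set0) <= 1 by case: (_ != _).
move: h; set b := nat_of_bool _ => h.
lia.
Qed.


Lemma good0 : good set0 set0.
Proof.
apply/and4P; split; rewrite ?sub0set //; by apply/forall_inP => e; rewrite inE.
Qed.

End Common.

Lemma F00 n : n.-1 <= #|Fset (set0 : {set 'I_n * 'I_n}) set0|.
Proof.
case: n => [//|m] /=.
pose f (i : 'I_m) : 'I_m.+1 * 'I_m.+1 := (widen_ord (leqnSn m) i, lift ord0 i).
have finj : injective f by move=> i j /(congr1 (fun p => val p.1)) /= h; apply: val_inj.
have sub : [set f x | x in [set: 'I_m]] \subset Fset set0 set0.
  apply/subsetP => e /imsetP[i _ ->]; rewrite FsetP !inE /pathe /= /bump /=.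
  by rewrite add1n ltnSn eqxx /=; apply/forall_inP => f'; rewrite inE.
have := subset_leq_card sub; rewrite (card_imset _ finj) cardsT card_ord; exact.
Qed.

Lemma upper_final n : 3 * g_ECB_K3 n <= 2 * n + 2.
Proof.
have [h _] := upper (@good0 n) (leqnn #|avail set0 set0|).
have ea : avail set0 set0 = edges n by apply/setP => e; rewrite availP !inE andbT.
rewrite /g_ECB_K3 -ea in h *.
have := (F00 n); move: h; rewrite /Pot; set b := nat_of_bool _; have : b <= 1 by rewrite /b; case: (_ != _).
set v := ecb_value _ _ _ _; lia.
Qed.




Lemma two_tri (n x y z x' y' z' a b : nat) : x < y -> y < z -> z < n -> x' < y' -> y' < z' -> z' < n ->
  ((x < y' < y) && (y < z') || (y' < x < z') && (z' < y)) = false ->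
  ((y < x' < z) && (z < y') || (x' < y < y') && (y' < z)) = false ->
  ((x < x' < z) && (z < z') || (x' < x < z') && (z' < z)) = false ->
  (a = x /\ b = y \/ a = y /\ b = z \/ a = x /\ b = z) ->
  (a = x' /\ b = y' \/ a = y' /\ b = z' \/ a = x' /\ b = z') ->
  (b = a.+1 \/ a = 0 /\ b = n.-1) -> y = y'.
Proof.
move=> ? ? ? ? ? ? c1 c2 c3 H1 H2 H3.
case: H1 => [[? ?]|[[? ?]|[? ?]]]; case: H2 => [[? ?]|[[? ?]|[? ?]]]; subst; case: H3 => [?|[? ?]]; lia.
Qed.

Lemma crossA (n a b w v p q : nat) :
 a < w -> w < b -> b < v -> v < n -> p < q -> q < n ->
 ~~ ((a < p < b) && (b < q) || (p < a < q) && (q < b)) ->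
 ~ (p = a /\ q = b) ->
 (~~ ((a < p < w) && (w < q) || (p < a < q) && (q < w)) \/ w = a.+1) ->
 (p = a -> a < q -> q < b -> q <= w) ->
 (~~ ((a < p < v) && (v < q) || (p < a < q) && (q < v)) \/ (a = 0 /\ v = n.-1) \/ v = a.+1) ->
 (p = a -> b < q -> v <= q) ->
 ~~ ((w < p < v) && (v < q) || (p < w < q) && (q < v)).
Proof.
move=> aw wb bv vn pq qn F0 Fe Fw Fwm Fv Fvm.
apply/negP; case/orP => /andP[/andP[h1 h2] h3].
- case: (ltnP p b) => pb.
    by clear -F0 aw h1 h3 bv pb; lia.
  case: Fv => [Fv|[[a0 v0]|va]]; [clear -Fv aw wb h1 h2 h3 pb|lia|lia]; lia.
- case: (ltngtP p a) => pa.
  + case: (ltnP q b) => qb.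
      by clear -F0 pa qb aw h2; lia.
    case: Fv => [Fv|[[a0 v0]|va]]; [clear -Fv pa qb h3 aw h2|lia|lia]; lia.
  + case: Fw => [Fw|wa]; [clear -Fw pa h1 h2; lia|lia].
  + case: (ltngtP q b) => qb.
    * have := Fwm pa; lia.
    * have := Fvm pa qb; lia.
    * by apply: Fe.
Qed.

Lemma crossB (n a b w v p q : nat) :
 v < a -> a < w -> w < b -> b < n -> p < q -> q < n ->
 ~~ ((a < p < b) && (b < q) || (p < a < q) && (q < b)) ->
 ~ (p = a /\ q = b) ->
 (~~ ((a < p < w) && (w < q) || (p < a < q) && (q < w)) \/ w = a.+1) ->
 (p = a -> a < q -> q < b -> q <= w) ->
 (~~ ((v < p < a) && (a < q) || (p < v < q) && (q < a)) \/ a = v.+1 \/ (v = 0 /\ a = n.-1)) ->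
 (p = a -> b < q -> False) ->
 (q = a -> p < a -> v <= p) ->
 ~~ ((v < p < w) && (w < q) || (p < v < q) && (q < w)).
Proof.
move=> va aw wb bn pq qn F0 Fe Fw Fwm Fv NoR Fvm.
apply/negP; case/orP => /andP[/andP[h1 h2] h3].
- case: (ltngtP p a) => pa.
  + case: (ltnP q b) => qb.
      by clear -F0 pa qb aw h3; lia.
    case: Fv => [Fv|[av|[v0 a0]]]; [clear -Fv pa qb h1 h3 aw wb|lia|lia]; lia.
  + case: Fw => [Fw|wa]; [clear -Fw pa h2 h3; lia|lia].
  + case: (ltngtP q b) => qb.
    * have := Fwm pa; lia.
    * exact: NoR pa qb.
    * by apply: Fe.
- case: (ltngtP q a) => qa.
  + case: Fv => [Fv|[av|[v0 a0]]]; [clear -Fv qa h1 h2|lia|lia]; lia.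
  + by clear -F0 qa h1 h2 h3 va aw wb; lia.
  + have := Fvm qa; lia.
Qed.

Section Lower.
Variable n : nat.
Notation V := 'I_n.
Notation E := (V * V)%type.

Definition bd (e : E) := (e.2 == e.1.+1 :> nat) || ((e.1 == 0 :> nat) && (e.2 == n.-1 :> nat)).

Lemma bd_cross e f : bd e -> cross e f = false.
Proof.
case: e f => [a b] [p q]; rewrite /bd /cross /=.
have := ltn_ord q; have := ltn_ord b; lia.
Qed.

Lemma bd_cross' e f : bd f -> cross e f = false.
Proof. by move=> h; rewrite crossC bd_cross. Qed.

Definition Hs (C : {set E}) := [set e in edges n | (e \in C) || bd e].
Definition TH (C : {set E}) := [set t : V * V * V |
      [&& (t.1.1, t.1.2) \in Hs C, (t.1.2, t.2) \in Hs C & (t.1.1, t.2) \in Hs C]].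

Lemma HsP C e : e \in Hs C = (e.1 < e.2) && ((e \in C) || bd e).
Proof. by rewrite /Hs !inE. Qed.

Lemma THP C t : t \in TH C = [&& (t.1.1, t.1.2) \in Hs C, (t.1.2, t.2) \in Hs C & (t.1.1, t.2) \in Hs C].
Proof. by rewrite /TH in_set. Qed.

Section Sat.
Variable C : {set E}.
Hypothesis lt : forall e, e \in C -> e.1 < e.2.
Hypothesis nc : forall e f, e \in C -> f \in C -> cross e f = false.
Hypothesis sat : forall e, e \in edges n -> ~~ bd e -> ncr C e -> e \in C.

Lemma Hnc e f : e \in Hs C -> f \in Hs C -> cross e f = false.
Proof.
rewrite !HsP => /andP[_ /orP[eC|be]] /andP[_ /orP[fC|bf]]; first exact: nc.
- exact: bd_cross'.
- exact: bd_cross.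
- exact: bd_cross.
Qed.

Lemma mid_exists (y : V) : 0 < y < n.-1 -> exists2 t, t \in TH C & t.1.2 = y.
Proof.
move=> /andP[y0 yn].
have yn' : y < n by apply: ltn_ord.
have h1 : y.-1 < n by lia.
have h2 : y.+1 < n by lia.
pose ym := Ordinal h1; pose yp := Ordinal h2.
have Pym : (ym < y) && ((ym, y) \in Hs C).
  by rewrite HsP /= /bd /=; apply/andP; split; [lia| apply/andP; split; [lia|]; apply/orP; right; apply/orP; left; apply/eqP; lia].
have Pyp : (y < yp) && ((y, yp) \in Hs C).
  by rewrite HsP /= /bd /=; apply/andP; split; [lia| apply/andP; split; [lia|]; apply/orP; right; apply/orP; left; apply/eqP; lia].
case: (@arg_minnP _ ym (fun u : V => (u < y) && ((u, y) \in Hs C)) (fun u : V => val u) Pym) => x /andP[xy xH] xmin.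
case: (@arg_maxnP _ yp (fun u : V => (y < u) && ((y, u) \in Hs C)) (fun u : V => val u) Pyp) => z /andP[yz zH] zmax.
exists (x, y, z) => //; rewrite inE /= xH zH /=.
rewrite HsP; apply/andP; split; first by rewrite /=; lia.
apply/orP; case: (boolP (bd (x, z))) => nb; [by right | left].
apply: sat => //; first by rewrite inE /=; lia.
apply/forall_inP => -[p q] pqC.
have lpq := lt pqC; rewrite /= in lpq.
have F1 : (x, y) \in C -> cross (x, y) (p, q) = false by move=> h; apply: nc.
have F2 : (y, z) \in C -> cross (y, z) (p, q) = false by move=> h; apply: nc.
have F3 : (x, y) \notin C -> bd (x, y) by move: xH; rewrite HsP => /andP[_ /orP[->|->]].
have F4 : (y, z) \notin C -> bd (y, z) by move: zH; rewrite HsP => /andP[_ /orP[->|->]].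
have F5 : (q : nat) = y -> p < y -> x <= p.
  move=> qy py; have qy' : q = y by apply: val_inj.
  apply: xmin; rewrite py HsP /= py -qy' pqC //.
have F6 : (p : nat) = y -> y < q -> q <= z.
  move=> py yq; have py' : p = y by apply: val_inj.
  apply: zmax; rewrite yq HsP /= yq -py' pqC //.
move: F1 F2 F3 F4 F5 F6; rewrite /bd /cross /=.
case: ((x, y) \in C); case: ((y, z) \in C) => /=; have := ltn_ord z; lia.
Qed.


Definition ed (t : V * V * V) : seq E := [:: (t.1.1, t.1.2); (t.1.2, t.2); (t.1.1, t.2)].

Lemma sat_count : n - 2 <= triangles C + #|[set e in edges n | bd e && (e \notin C)]|.
Proof.
set NB := [set e in edges n | bd e && (e \notin C)].
set Mid := [set y : V | 0 < y < n.-1].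
have cM : n - 2 <= #|Mid|.
  case: (posnP n) => [n0|n0]; first by have -> : n - 2 = 0 by lia.
  have n1 : n.-1 < n by lia.
  pose a := Ordinal n0; pose b := Ordinal n1.
  have sub : ~: Mid \subset [set a; b].
    apply/subsetP => y; rewrite !inE => hy; apply/orP.
    case: (y =P a) => [->|na]; [by left | right]; apply/eqP/val_inj => /=.
    have : (y : nat) != 0 by apply/eqP => h; apply: na; apply: val_inj; exact: h.
    have := ltn_ord y; move: hy; lia.
  have := subset_leq_card sub; rewrite cards2.
  have := cardsC Mid; rewrite card_ord; case: (a != b) => /=; lia.
set Good := [set y in Mid | [exists t, (t \in Tset C) && (t.1.2 == y)]].
have cG : #|Good| <= triangles C.
  rewrite trianglesE; apply: leq_trans (leq_imset_card (fun t : V * V * V => t.1.2) (Tset C)).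
  apply: subset_leq_card; apply/subsetP => y; rewrite inE => /andP[_ /existsP[t /andP[tT /eqP <-]]].
  by apply/imsetP; exists t.
pose ty (y : V) := odflt (y, y, y) [pick t in TH C | t.1.2 == y].
have tyP : forall y, y \in Mid -> ty y \in TH C /\ (ty y).1.2 = y.
  move=> y; rewrite inE => hy; rewrite /ty; case: pickP => [t /andP[tT /eqP tyy]|none] //=.
  have [t tT tyy] := mid_exists hy; have := none t; rewrite tT tyy eqxx //.
pose killer (y : V) := odflt (y, y) [pick e in NB | e \in ed (ty y)].
set Bad := Mid :\: Good.
have kP : forall y, y \in Bad -> killer y \in NB /\ killer y \in ed (ty y).
  move=> y; rewrite inE => /andP[yG yM]; have [tT tm] := tyP y yM.
  rewrite /killer; case: pickP => [e /andP[eN eE]|none] //=.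
  exfalso; move: yG; rewrite inE yM /= => /existsP; apply; exists (ty y); rewrite tm eqxx andbT.
  move: tT; rewrite THP => /and3P[h1 h2 h3].
  have chk : forall e, e \in Hs C -> e \in ed (ty y) -> e \in C.
    move=> e; rewrite HsP => /andP[e12 /orP[//|be]] eE; have := none e; rewrite eE andbT.
    by rewrite inE be inE /= e12 /=; case: (e \in C).
  by rewrite inE; apply/and3P; split; apply: chk => //; rewrite !inE eqxx ?orbT.
have kinj : {in Bad &, injective killer}.
  move=> y y' yB y'B ek.
  have [kN kE] := kP y yB; have [kN' kE'] := kP y' y'B.
  have [tT tm] := tyP y (subsetP (subsetDl Mid Good) y yB).
  have [tT' tm'] := tyP y' (subsetP (subsetDl Mid Good) y' y'B).
  move: kE' kN kE; rewrite -ek => kE' kN kE; rewrite -tm -tm'.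
  move: (ty y) (ty y') (killer y) tT tT' kE kE' kN => -[[x yy] z] [[x' yy'] z'] [p1 p2] /= tT tT' kE kE' kN.
  move: tT tT'; rewrite !THP /= => /and3P[a1 a2 a3] /and3P[b1 b2 b3].
  have o1 := a1; have o2 := a2; have o3 := a3; have o4 := b1; have o5 := b2.
  move: o1 o2 o3 o4 o5; rewrite !HsP /= => /andP[l1 _] /andP[l2 _] /andP[l3 _] /andP[l4 _] /andP[l5 _].
  have c1 := Hnc a1 b2; have c2 := Hnc a2 b1; have c3 := Hnc a3 b3.
  move: c1 c2 c3; rewrite /cross /= => c1 c2 c3.
  move: kN; rewrite inE => /andP[_ /andP[bp _]].
  apply: val_inj; apply: (@two_tri n x yy z x' yy' z' p1 p2) => //; try apply: ltn_ord.
  - by move: kE; rewrite !inE !xpair_eqE => /orP[/andP[/eqP -> /eqP ->]|/orP[/andP[/eqP -> /eqP ->]|/andP[/eqP -> /eqP ->]]]; auto.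
  - by move: kE'; rewrite !inE !xpair_eqE => /orP[/andP[/eqP -> /eqP ->]|/orP[/andP[/eqP -> /eqP ->]|/andP[/eqP -> /eqP ->]]]; auto.
  - by move: bp; rewrite /bd /= => /orP[/eqP ->|/andP[/eqP -> /eqP ->]]; auto.
have cB : #|Bad| <= #|NB|.
  rewrite -(card_in_imset kinj); apply: subset_leq_card; apply/subsetP => e /imsetP[y yB ->].
  by case: (kP y yB).
have := cardsID Good Mid; have : #|Mid :&: Good| <= #|Good| by apply: subset_leq_card; apply: subsetIr.
move=> h1; rewrite -/Bad => h2; lia.
Qed.

End Sat.

Section Cross.
Variable C : {set E}.
Hypothesis lt : forall e, e \in C -> e.1 < e.2.
Hypothesis nc : forall e f, e \in C -> f \in C -> cross e f = false.

Lemma cross_exists e : e \in edges n -> ~~ bd e -> e \notin C -> ncr C e ->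
  exists f, [&& f \in edges n, ncr C f & cross e f].
Proof.
case: e => a b; rewrite inE /= => ab nb eC /forall_inP ne.
have bn := ltn_ord b.
have h1 : a.+1 < n by rewrite /bd /= in nb; lia.
pose wa := Ordinal h1.
have Pw : (a < wa < b) && ((a, wa) \in Hs C).
  rewrite HsP /= /bd /=; move: nb; rewrite /bd /= => nb; apply/andP; split; first by lia.
  by apply/andP; split; [lia|]; rewrite eqxx orbT.
case: (@arg_maxnP _ wa (fun u : V => (a < u < b) && ((a, u) \in Hs C)) (fun u : V => val u) Pw).
move=> w /andP[/andP[aw wb] wH] wmax.
have Fe : forall p q : V, (p, q) \in C -> ~ ((p : nat) = a /\ (q : nat) = b).
  move=> p q pq [pa qb]; have pa' : p = a by apply: val_inj.
  have qb' : q = b by apply: val_inj.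
  by move: eC; rewrite -pa' -qb' pq.
have F0 : forall p q : V, (p, q) \in C -> ~~ cross (a, b) (p, q).
  by move=> p q pq; apply: ne.
have Fw : forall p q : V, (p, q) \in C -> ~~ cross (a, w) (p, q) \/ (w : nat) = a.+1.
  move=> p q pq; case: (boolP ((a, w) \in C)) => h; first by left; rewrite nc.
  right; move: wH; rewrite HsP (negbTE h) /= /bd /=; lia.
have Fwmax : forall p q : V, (p, q) \in C -> (p : nat) = a -> a < q -> q < b -> q <= w.
  move=> p q pq pa aq qb; have pa' : p = a by apply: val_inj.
  by apply: wmax; rewrite aq qb HsP /= -pa' pq orTb andbT; have := lt pq.
case: (pickP (fun r : V => (b < r) && ((a, r) \in Hs C))) => [r0 Pr0|none].
  case: (@arg_minnP _ r0 (fun u : V => (b < u) && ((a, u) \in Hs C)) (fun u : V => val u) Pr0).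
  move=> v /andP[bv vH] vmin.
  have Fv : forall p q : V, (p, q) \in C ->
      ~~ cross (a, v) (p, q) \/ ((a : nat) = 0 /\ (v : nat) = n.-1) \/ (v : nat) = a.+1.
    move=> p q pq; case: (boolP ((a, v) \in C)) => h; first by left; rewrite nc.
    right; move: vH; rewrite HsP (negbTE h) /= /bd /=; lia.
  have Fvmin : forall p q : V, (p, q) \in C -> (p : nat) = a -> b < q -> v <= q.
    move=> p q pq pa bq; have pa' : p = a by apply: val_inj.
    by apply: vmin; rewrite bq HsP /= -pa' pq orTb andbT; have := lt pq.
  exists (w, v); rewrite inE /=; apply/and3P; split; first by lia.
    apply/forall_inP => -[p q] pq; have lpq := lt pq; rewrite /= in lpq.
    exact: (crossA aw wb bv (ltn_ord v) lpq (ltn_ord q) (F0 p q pq) (Fe p q pq) (Fw p q pq)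
                   (Fwmax p q pq) (Fv p q pq) (Fvmin p q pq)).
  rewrite /cross /=; lia.
have a0 : 0 < a.
  case: (posnP a) => // a0; exfalso.
  have h3 : n.-1 < n by lia.
  have := none (Ordinal h3); rewrite HsP /bd /= a0 !eqxx /= !orbT /= andbT.
  move: nb; rewrite /bd /= a0 /=; lia.
have h2 : a.-1 < n by have := ltn_ord a; lia.
pose va := Ordinal h2.
have Pva : (va < a) && ((va, a) \in Hs C).
  rewrite HsP /= /bd /=; apply/andP; split; first by lia.
  by apply/andP; split; [lia|]; apply/orP; right; apply/orP; left; apply/eqP; lia.
case: (@arg_minnP _ va (fun u : V => (u < a) && ((u, a) \in Hs C)) (fun u : V => val u) Pva).
move=> v /andP[va' vH] vmin.
have Fv : forall p q : V, (p, q) \in C ->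
    ~~ cross (v, a) (p, q) \/ (a : nat) = v.+1 \/ ((v : nat) = 0 /\ (a : nat) = n.-1).
  move=> p q pq; case: (boolP ((v, a) \in C)) => h; first by left; rewrite nc.
  right; move: vH; rewrite HsP (negbTE h) /= /bd /=; lia.
have Fvmin : forall p q : V, (p, q) \in C -> (q : nat) = a -> p < a -> v <= p.
  move=> p q pq qa pa; have qa' : q = a by apply: val_inj.
  by apply: vmin; rewrite pa HsP /= -qa' pq orTb andbT; have := lt pq.
have NoR : forall p q : V, (p, q) \in C -> (p : nat) = a -> b < q -> False.
  move=> p q pq pa bq; have pa' : p = a by apply: val_inj.
  by have := none q; rewrite bq HsP /= -pa' pq orTb andbT; have := lt pq; move=> /= ->.
exists (v, w); rewrite inE /=; apply/and3P; split; first by lia.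
  apply/forall_inP => -[p q] pq; have lpq := lt pq; rewrite /= in lpq.
  exact: (crossB va' aw wb bn lpq (ltn_ord q) (F0 p q pq) (Fe p q pq) (Fw p q pq)
                 (Fwmax p q pq) (Fv p q pq) (NoR p q pq) (Fvmin p q pq)).
rewrite /cross /=; lia.
Qed.

End Cross.

Definition U (C B : {set E}) := [set e in B | ~~ bd e && ncr C e].
Definition BB (B : {set E}) := #|[set e in B | bd e]|.
Definition fr (C B : {set E}) := #|[set e in avail C B | bd e]|.

Lemma UP C B e : e \in U C B = [&& e \in B, ~~ bd e & ncr C e].
Proof. by rewrite /U in_set. Qed.

Lemma ncr_sub (C : {set E}) e f : ncr (f |: C) e -> ncr C e.
Proof. by move=> /forall_inP h; apply/forall_inP => g gC; apply: h; rewrite in_setU1 gC orbT. Qed.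

Lemma U_C C B f : U (f |: C) B \subset U C B.
Proof. by apply/subsetP => e; rewrite !UP => /and3P[-> -> /ncr_sub ->]. Qed.

Lemma U_B C B f : U C (f |: B) \subset f |: U C B.
Proof.
apply/subsetP => e; rewrite UP in_setU1 => /and3P[]; rewrite in_setU1 => /orP[->//|eB] be ne.
by rewrite UP eB be ne orbT.
Qed.

Lemma U_cross C B e f : cross e f -> e \notin U (f |: C) B.
Proof.
move=> cef; rewrite UP; apply/negP => /and3P[_ _ /forall_inP/(_ f)].
by rewrite in_setU1 eqxx cef => /(_ isT).
Qed.

Lemma inbd (A : {set E}) e : (e \in [set x in A | bd x]) = (e \in A) && bd e.
Proof. by rewrite in_set. Qed.

Lemma card_bd (A : {set E}) e : e \in A ->
  #|[set x in A | bd x]| = #|[set x in A :\ e | bd x]| + bd e.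
Proof.
move=> eA; rewrite (cardsD1 e [set x in A | bd x]) inE eA /= addnC; congr (_ + _).
by apply: eq_card => x; rewrite !inE andbA.
Qed.

Lemma cross_move C B e : good C B -> #|U C B| <= 1 -> e \in U C B ->
  exists2 f, f \in cmoves C B & cross e f.
Proof.
move=> g U1 eU; have [lt _ dj nc] := goodP g.
move: (eU); rewrite UP => /and3P[eB be ne].
have eE : e \in edges n by case/and4P: g => _ /subsetP sB _ _; apply: sB.
have eC : e \notin C by apply/negP => eC; apply: (dj e eC eB).
have [f /and3P[fE nf cef]] := cross_exists lt nc eE be eC ne.
exists f => //; rewrite cmovesP fE nf andbT /=.
apply/andP; split.
  by apply/negP => fC; move: ne => /forall_inP/(_ f fC); rewrite cef.
apply/negP => fB.
have fU : f \in U C B.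
  rewrite UP fB nf andbT /=; apply/negP => bf; by rewrite bd_cross' in cef.
have : f = e by move/card_le1P: U1 => /(_ e eU f); rewrite fU => /esym/eqP.
by move=> fe; rewrite fe cross_irr in cef.
Qed.

Lemma lower_term C B : good C B -> cmoves C B == set0 -> #|U C B| <= 1 ->
  [/\ U C B = set0, fr C B = 0 & n - 2 <= triangles C + BB B].
Proof.
move=> g /eqP c0 U1.
have U0 : U C B = set0.
  apply/eqP; apply/set0Pn => -[e eU]; have [f fc _] := cross_move g U1 eU.
  by rewrite c0 inE in fc.
have fr0 : fr C B = 0.
  apply/eqP; rewrite cards_eq0; apply/eqP/setP => e; rewrite inbd in_set0.
  apply/negP => /andP[eA be]; have : e \in cmoves C B.
    rewrite /cmoves in_set eA /=; apply/forall_inP => f _; rewrite bd_cross //.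
  by rewrite c0 inE.
split => //.
have [lt _ dj nc] := goodP g.
have sat : forall e, e \in edges n -> ~~ bd e -> ncr C e -> e \in C.
  move=> e eE be ne; apply/negPn/negP => eC.
  case: (boolP (e \in B)) => eB.
    have : e \in U C B by rewrite UP eB be ne.
    by rewrite U0 inE.
  have : e \in cmoves C B by rewrite cmovesP eE eC eB ne.
  by rewrite c0 inE.
apply: leq_trans (sat_count lt nc sat) _; rewrite leq_add2l /BB.
apply: subset_leq_card; apply/subsetP => e; rewrite !inE => /and3P[e12 be eC].
rewrite be andbT; apply/negPn/negP => eB.
move/eqP: fr0; rewrite cards_eq0 => /eqP/setP/(_ e); rewrite !inE e12 eC eB be.
by [].
Qed.


Lemma fr_C C B e : e \in avail C B -> fr C B = fr (e |: C) B + bd e.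
Proof. by move=> eA; rewrite /fr availC // (card_bd eA). Qed.

Lemma fr_B C B e : e \in avail C B -> fr C B = fr C (e |: B) + bd e.
Proof. by move=> eA; rewrite /fr availB // (card_bd eA). Qed.

Lemma BB_B (B : {set E}) e : e \notin B -> BB (e |: B) = BB B + bd e.
Proof.
move=> eB; rewrite /BB (card_bd (setU11 e B)).
have -> : (e |: B) :\ e = B.
  apply/setP => x; rewrite !inE; case: (x =P e) => [->|] //=; by rewrite (negbTE eB).
by [].
Qed.

Lemma le_bigmin (A : {set E}) (F : E -> nat) x m :
  m <= x -> (forall e, e \in A -> m <= F e) -> m <= \big[minn/x]_(e in A) F e.
Proof.
move=> mx h; apply: (big_ind (fun v => m <= v)) => //.
  by move=> a b ha hb; rewrite leq_min ha hb.
Qed.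

Lemma lower k : forall C B, good C B -> #|avail C B| <= k ->
  (#|U C B| <= 1 -> n - 2 <= ecb_value k true C B + BB B + (fr C B + #|U C B|)./2) /\
  (U C B = set0 -> n - 2 <= ecb_value k false C B + BB B + (fr C B).+1./2).
Proof.
elim: k => [|k IH] C B g ha.
  have a0 : avail C B == set0 by rewrite -cards_eq0 -leqn0.
  have c0 := avail0 a0.
  rewrite !ecb0; split => [U1|U0].
    by have [_ _ h] := lower_term g c0 U1; apply: leq_trans h _; exact: leq_addr.
  have U1 : #|U C B| <= 1 by rewrite U0 cards0.
  by have [_ _ h] := lower_term g c0 U1; apply: leq_trans h _; exact: leq_addr.
rewrite !ecbE; case: ifP => c0.
  split => [U1|U0].
    by have [_ _ h] := lower_term g c0 U1; apply: leq_trans h _; exact: leq_addr.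
  have U1 : #|U C B| <= 1 by rewrite U0 cards0.
  by have [_ _ h] := lower_term g c0 U1; apply: leq_trans h _; exact: leq_addr.
split => [U1|U0].
  case: (set_0Vmem (U C B)) => [U0|[e eU]].
    case: (set_0Vmem [set x in avail C B | bd x]) => [F0|[b bF]].
      have [e eC] : exists e, e \in cmoves C B by apply/set0Pn; rewrite c0.
      have eA : e \in avail C B by apply: (subsetP (cmoves_avail C B)).
      have ha' : #|avail (e |: C) B| <= k by rewrite availC //; apply: card_avail_step.
      have U0' : U (e |: C) B = set0 by apply/eqP; rewrite -subset0 -U0 U_C.
      have [_ h] := IH (e |: C) B (good_C g eC) ha'.
      have fr0 : fr C B = 0 by rewrite /fr F0 cards0.
      have := h U0'; have := fr_C eA; rewrite fr0 U0 cards0 => fe h2.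
      have hm : ecb_value k false (e |: C) B <= \max_(f in cmoves C B) ecb_value k false (f |: C) B.
        by apply: (@leq_bigmax_cond _ (fun f => f \in cmoves C B) (fun f => ecb_value k false (f |: C) B)).
      move: h2 fe; set v := ecb_value k false (e |: C) B in hm *; set M := \max_(f in _) _ in hm *.
      set F' := fr (e |: C) B; move=> h2 fe.
      have F'0 : F' = 0 by lia.
      rewrite F'0 in h2; lia.
    move: bF; rewrite inbd => /andP[bA bb].
    have bC : b \in cmoves C B by rewrite /cmoves in_set bA /=; apply/forall_inP => f _; rewrite bd_cross.
    have ha' : #|avail (b |: C) B| <= k by rewrite availC //; apply: card_avail_step.
    have U0' : U (b |: C) B = set0 by apply/eqP; rewrite -subset0 -U0 U_C.
    have [_ h] := IH (b |: C) B (good_C g bC) ha'.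
    have := h U0'; have := fr_C bA; rewrite bb U0 cards0 => fe h2.
    have hm : ecb_value k false (b |: C) B <= \max_(f in cmoves C B) ecb_value k false (f |: C) B.
      by apply: (@leq_bigmax_cond _ (fun f => f \in cmoves C B) (fun f => ecb_value k false (f |: C) B)).
    move: h2 fe; set v := ecb_value k false (b |: C) B in hm *; set M := \max_(f in _) _ in hm *.
    set F := fr C B; set F' := fr (b |: C) B; move=> h2 fe.
    have : F'.+1./2 = (F + 0)./2 by rewrite fe addn0 addn1.
    lia.
  have [f fC cef] := cross_move g U1 eU.
  have fA : f \in avail C B by apply: (subsetP (cmoves_avail C B)).
  have ha' : #|avail (f |: C) B| <= k by rewrite availC //; apply: card_avail_step.
  have U0' : U (f |: C) B = set0.
    apply/eqP/set0Pn => -[x xU]; have xU0 := subsetP (U_C C B f) x xU.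
    have xe : x = e by move/card_le1P: U1 => /(_ e eU x); rewrite xU0 => /esym/eqP.
    by move: xU; rewrite xe (negbTE (@U_cross C B e f cef)).
  have bf : bd f = false by apply/negP => bf; rewrite bd_cross' in cef.
  have [_ h] := IH (f |: C) B (good_C g fC) ha'.
  have := h U0'; have := fr_C fA; rewrite bf addn0 => fe.
  have hm : ecb_value k false (f |: C) B <= \max_(f in cmoves C B) ecb_value k false (f |: C) B.
    by apply: (@leq_bigmax_cond _ (fun f => f \in cmoves C B) (fun f => ecb_value k false (f |: C) B)).
  have U1' : 1 <= #|U C B| by apply/card_gt0P; exists e.
  move=> h2; rewrite -fe in h2.
  move: h2; set v := ecb_value k false (f |: C) B in hm *; set M := \max_(f in _) _ in hm *.
  set F := fr C B; set u := #|U C B| in U1 U1' *; move=> h2.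
  have : u = 1 by lia.
  move=> ->; lia.
set K := BB B + (fr C B).+1./2.
suff : n - 2 - K <= \big[minn/n ^ 3]_(e in avail C B) ecb_value k true C (e |: B).
  set M := \big[minn/_]_(_ in _) _; lia.
have n3 : n <= n ^ 3 by case: (posnP n) => [->//|p]; rewrite expnS leq_pmulr // expn_gt0 p.
apply: le_bigmin; first by apply: leq_trans n3; apply: leq_trans (leq_subr _ _) (leq_subr _ _).
move=> e eA.
have ha' : #|avail C (e |: B)| <= k by rewrite availB //; apply: card_avail_step.
have eB : e \notin B by move: eA; rewrite availP => /and3P[].
have [h _] := IH C (e |: B) (good_B g eA) ha'.
have Ue : U C (e |: B) \subset [set e] by have := @U_B C B e; rewrite U0 setU0.
have U1 : #|U C (e |: B)| <= 1 by rewrite -(cards1 e); apply: subset_leq_card.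
have := h U1; have := fr_B eA; have := BB_B eB.
case: (boolP (bd e)) => be /=.
  have U0' : U C (e |: B) = set0.
    apply/eqP/set0Pn => -[x xU]; move: (subsetP Ue x xU); rewrite inE => /eqP xe.
    by move: xU; rewrite xe UP be andbF.
  rewrite U0' cards0 addn0 => h1 h2 h3; rewrite h1 in h3; rewrite /K h2 addn1 /=.
  move: h3; set v := ecb_value k true C (e |: B); set f2 := (fr C (e |: B))./2; lia.
rewrite !addn0 => h1 h2 h3; rewrite h1 -h2 in h3.
move: h3; set v := ecb_value k true C (e |: B); set u := #|U C (e |: B)| in U1 *.
have : (fr C B + u)./2 <= (fr C B).+1./2 by apply: half_leq; rewrite -addn1 leq_add2l.
rewrite /K; set a1 := (fr C B + u)./2; set a2 := (fr C B).+1./2; lia.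
Qed.

End Lower.

Lemma fr00 n : fr (set0 : {set 'I_n * 'I_n}) set0 <= n.
Proof.
rewrite /fr.
pose h (e : 'I_n * 'I_n) := if (e.2 : nat) == e.1.+1 then e.1 else e.2.
set A := [set x in _ | _].
have hinj : {in A &, injective h}.
  move=> [a b] [c d]; rewrite !inbd availP !inE /h /bd /= => /andP[/andP[ab _] bab] /andP[/andP[cd _] bcd].
  have bn := ltn_ord b; have dn := ltn_ord d.
  have H : (a : nat) = c /\ (b : nat) = d -> (a, b) = (c, d).
    by case=> h1 h2; congr pair; apply: val_inj.
  move=> hh; apply: H; move: hh.
  case: eqP => e1; case: eqP => e2 => hh; move/(congr1 val): hh => /= hh; move: bab bcd; lia.
rewrite -(card_in_imset hinj); apply: leq_trans (max_card _) _; rewrite card_ord.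
by [].
Qed.

Lemma lower_final n : n - 2 <= g_ECB_K3 n + n./2.
Proof.
have [h _] := lower (@good0 n) (leqnn #|avail set0 set0|).
have U0 : U (set0 : {set 'I_n * 'I_n}) set0 = set0 by apply/setP => e; rewrite UP !inE.
have ea : avail (set0 : {set 'I_n * 'I_n}) set0 = edges n by apply/setP => e; rewrite availP !inE andbT.
have U1 : #|U (set0 : {set 'I_n * 'I_n}) set0| <= 1 by rewrite U0 cards0.
have := h U1; rewrite /g_ECB_K3 -ea U0 cards0 addn0 /BB.
have -> : [set e in (set0 : {set 'I_n * 'I_n}) | bd e] = set0 by apply/setP => e; rewrite !inE.
rewrite cards0 addn0 => h1; apply: leq_trans h1 _; rewrite leq_add2l.
exact: half_leq (fr00 n).
Qed.

Import Order.TTheory GRing.Theory Num.Theory.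
Local Open Scope ring_scope.

Theorem theorem1p7 :
  forall eps : rat, 0 < eps ->
  exists N : nat, forall n : nat, (N <= n)%N ->
    (1 - eps) * (n%:R / 2) <= (g_ECB_K3 n)%:R /\
    (g_ECB_K3 n)%:R <= (1 + eps) * (2 * n%:R / 3).
Proof.
move=> eps e0; exists (Num.truncn (4 / eps)).+1 => n hn.
have hN : 4 / eps < n%:R.
  apply: lt_le_trans (truncnS_gt _) _; rewrite ler_nat; exact: hn.
have en : 4 <= eps * n%:R.
  have := hN; rewrite ltr_pdivrMr // => h; rewrite mulrC; exact: ltW.
have lo : (n <= 2 * g_ECB_K3 n + 4)%N.
  have := lower_final n; have := odd_double_half n; rewrite -muln2; case: (odd n) => /=; lia.
have up := upper_final n.
have lo' : (n%:R : rat) <= 2 * (g_ECB_K3 n)%:R + 4.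
  by have := lo; rewrite -(ler_nat rat) natrD natrM.
have up' : 3 * (g_ECB_K3 n)%:R <= 2 * (n%:R : rat) + 2.
  by have := up; rewrite -(ler_nat rat) natrD !(natrM rat).
move: en lo' up'; set x : rat := n%:R; set g : rat := (g_ECB_K3 n)%:R => en lo' up'.
split; nra.
Qed.
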